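(* Let $G$ be a finite simple graph with $G\in\mathcal{F}_3$. Then $crx_3(G)=3$ if and only if $G$ is isomorphic to $K_3$ or $K_4$.
   Context: An edge-coloured cycle is rainbow if all its edges have distinct colours. For $k\ge 1$, $\mathcal{F}_k$ is the family of graphs in which any $k$ vertices lie on a common cycle. For $G\in\mathcal{F}_k$, a $k$-rainbow cycle colouring of $G$ is an edge-colouring such that any $k$ vertices of $G$ lie on a common rainbow cycle; $crx_k(G)$ is the minimum number of colours in a $k$-rainbow cycle colouring of $G$. *)

(* Defs.v *)
From mathcomp Require Import all_boot.
Set Implicit Arguments. Unset Strict Implicit. Unset Printing Implicit Defensive.

Definition simple_graph (T : finType) (e : rel T) : Prop :=
  symmetric e /\ irreflexive e.

Definition is_graph_cycle (T : finType) (e : rel T) (s : seq T) : Prop :=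
  [/\ uniq s, 3 <= size s & cycle e s].

Definition in_F (k : nat) (T : finType) (e : rel T) : Prop :=
  forall S : {set T}, #|S| = k ->
    exists s : seq T, is_graph_cycle e s /\ {subset S <= s}.

Definition edge_colouring (T : finType) (e : rel T) (n : nat)
  (c : T -> T -> nat) : Prop :=
  forall x y, e x y -> c x y = c y x /\ c x y < n.

Definition rainbow (T : finType) (c : T -> T -> nat) (s : seq T) : bool :=
  uniq [seq c x (next s x) | x <- s].

Definition k_rainbow_cycle_colouring (k : nat) (T : finType) (e : rel T)
  (n : nat) (c : T -> T -> nat) : Prop :=
  edge_colouring e n c /\
  forall S : {set T}, #|S| = k ->
    exists s : seq T, [/\ is_graph_cycle e s, {subset S <= s} & rainbow c s].

Definition crx_eq (k : nat) (T : finType) (e : rel T) (n : nat) : Prop :=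
  (exists c, k_rainbow_cycle_colouring k e n c) /\
  forall m, m < n -> ~ exists c, k_rainbow_cycle_colouring k e m c.

Definition K_graph (n : nat) : rel 'I_n := fun i j => i != j.

Definition isomorphic (T U : finType) (e : rel T) (f : rel U) : Prop :=
  exists g : T -> U, bijective g /\ forall x y, e x y = f (g x) (g y).

(* Main.v *)
Require Import Defs.
From mathcomp Require Import all_boot.
From Stdlib Require Import Classical_Prop.
Set Implicit Arguments. Unset Strict Implicit. Unset Printing Implicit Defensive.

Lemma map_next3 (T : finType) (c : T -> T -> nat) (a b d : T) :
  uniq [:: a; b; d] ->
  [seq c x (next [:: a; b; d] x) | x <- [:: a; b; d]] = [:: c a b; c b d; c d a].
Proof.
rewrite /= !inE !negb_or => /and3P [/andP [ab ad] bd _].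
rewrite /next /= !eqxx /=.
by rewrite eq_sym (negbTE ab) eq_sym (negbTE ad) eq_sym (negbTE bd).
Qed.

Lemma tri (T : finType) (e : rel T) (c : T -> T -> nat) (a b d : T) :
  uniq [:: a; b; d] -> cycle e [:: a; b; d] -> symmetric e ->
  (forall x y, e x y -> c x y = c y x) -> rainbow c [:: a; b; d] ->
  forall u w z, u \in [:: a; b; d] -> w \in [:: a; b; d] -> z \in [:: a; b; d] ->
  u != w -> u != z -> w != z -> e u w /\ c u w != c u z.
Proof.
move=> U C Se Sc; rewrite /rainbow map_next3 //.
move: (U) C => /= ; rewrite !inE !negb_or => /and3P [/andP [ab ad] bd _].
rewrite andbT => /and3P [eab ebd eda].
have eba : e b a by rewrite Se.
have edb : e d b by rewrite Se.
have ead : e a d by rewrite Se.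
move=> /and3P [/andP [c1 c2] c3 _].
move=> u w z; rewrite !inE.
case/or3P=> /eqP ->; case/or3P=> /eqP ->; case/or3P=> /eqP -> //=;
  rewrite ?eqxx //; move=> *;
  rewrite ?(Sc _ _ eba) ?(Sc _ _ edb) ?(Sc _ _ ead) ?(Sc _ _ eab) ?(Sc _ _ ebd) ?(Sc _ _ eda);
  split => //; by rewrite ?(Sc _ _ eba) ?(Sc _ _ edb) ?(Sc _ _ ead) // eq_sym.
Qed.

Lemma size_rainbow (T : finType) (e : rel T) (m : nat) (c : T -> T -> nat) s :
  edge_colouring e m c -> is_graph_cycle e s -> rainbow c s -> size s <= m.
Proof.
move=> Ec [U S3 C] R.
rewrite -(size_map (fun x => c x (next s x))) -(size_iota 0 m).
apply: uniq_leq_size => // z /mapP [x xs ->].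
by rewrite mem_iota add0n; case: (Ec _ _ (next_cycle C xs)).
Qed.

Lemma card3 (T : finType) (x y z : T) :
  x != y -> x != z -> y != z -> #|[set x; y; z]| = 3.
Proof.
move=> xy xz yz.
rewrite (@eq_card _ _ (mem [:: x; y; z])); last by move=> w; rewrite !inE orbA.
have U : uniq [:: x; y; z] by rewrite /= !inE negb_or xy xz yz.
by rewrite (card_uniqP U).
Qed.

Lemma exists_set3 (T : finType) : 2 < #|T| -> exists S : {set T}, #|S| = 3.
Proof.
move=> H; exists [set x in take 3 (enum T)].
rewrite cardsE; move/card_uniqP: (take_uniq 3 (enum_uniq T)) => ->.
by rewrite size_take -cardT; case: ifP => //; rewrite ltnNge; case: (#|T|) H => [|[|[|[|n]]]].
Qed.

Definition col (i j : nat) : nat :=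
  if i + j == 3 then 2 else if (i + j == 1) || (i + j == 5) then 0 else 1.

Lemma col_sym i j : col i j = col j i.
Proof. by rewrite /col addnC. Qed.

Lemma col_lt3 i j : col i j < 3.
Proof. by rewrite /col; case: ifP => //; case: ifP. Qed.

Lemma col_rainbow i j k : i < 4 -> j < 4 -> k < 4 -> i != j -> i != k -> j != k ->
  uniq [:: col i j; col j k; col k i].
Proof.
by case: i => [|[|[|[|i]]]] //; case: j => [|[|[|[|j]]]] //; case: k => [|[|[|[|k]]]].
Qed.

Lemma iso_K (T : finType) (e : rel T) n : #|T| = n ->
  (forall x y, e x y = (x != y)) -> isomorphic e (@K_graph n).
Proof.
move=> H eE; exists (fun x => cast_ord H (enum_rank x)); split.
  exists (fun i => enum_val (cast_ord (esym H) i)) => x /=.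
    by rewrite cast_ordK enum_rankK.
  by rewrite enum_valK; apply: val_inj.
move=> x y; rewrite eE /K_graph.
have inj : injective (fun x => cast_ord H (enum_rank x)).
  move=> a b /(congr1 val) /= /val_inj /enum_rank_inj //.
by rewrite (inj_eq inj).
Qed.

Lemma K_iso (T : finType) (e : rel T) n : isomorphic e (@K_graph n) ->
  #|T| = n /\ exists g : T -> 'I_n, injective g /\ forall x y, e x y = (x != y).
Proof.
move=> [g [B E]]; split; first by rewrite (bij_eq_card B) card_ord.
exists g; split; first exact: bij_inj.
by move=> x y; rewrite E /K_graph (inj_eq (bij_inj B)).
Qed.

Theorem theorem6 (T : finType) (e : rel T) :
  simple_graph e -> in_F 3 e ->
  (crx_eq 3 e 3 <-> isomorphic e (@K_graph 3) \/ isomorphic e (@K_graph 4)).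
Proof.
move=> [Se Ie] F3; split.
- move=> [[c [Ec R]] Hmin].
  have Sc : forall x y, e x y -> c x y = c y x by move=> x y /Ec [].
  have N3 : 2 < #|T|.
    rewrite ltnNge; apply/negP => N; apply: (Hmin 1) => //.
    exists (fun _ _ => 0); split; first by move=> x y _.
    move=> S HS; exfalso; have := max_card (mem S).
    by rewrite HS; move: N; case: (#|T|) => [|[|[|n]]].
  have tri3 : forall S : {set T}, #|S| = 3 -> exists a b d,
      [/\ uniq [:: a; b; d], cycle e [:: a; b; d], rainbow c [:: a; b; d]
        & {subset S <= [:: a; b; d]}].
    move=> S HS; have [s [G Ss Rs]] := R S HS.
    have := size_rainbow Ec G Rs; case: G => U S3 C.
    case: s U S3 C Ss Rs => [|a [|b [|d [|f s]]]] //= U _ C Ss Rs _.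
    by exists a, b, d.
  have complete : forall x y, x != y -> e x y.
    move=> x y xy.
    have : 0 < #|~: [set x; y]|.
      have := cardsC [set x; y]; rewrite cards2 xy => H.
      by move: N3; rewrite -H; case: (#|~: _|).
    case/card_gt0P => z; rewrite !inE negb_or => /andP [zx zy].
    rewrite eq_sym in zx; rewrite eq_sym in zy.
    have [a [b [d [U C Rd Sub]]]] := tri3 _ (card3 xy zx zy).
    have [] := tri U C Se Sc Rd (Sub x _) (Sub y _) (Sub z _) xy zx zy;
      by rewrite // !inE eqxx ?orbT.
  have eE : forall x y, e x y = (x != y).
    move=> x y; case: eqVneq => [->|/complete //]; exact: Ie.
  have le4 : #|T| <= 4.
    rewrite leqNgt; apply/negP => N5.
    have [v _] : exists v : T, v \in T by apply/card_gt0P; move: N5; case: (#|T|).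
    case: (Classical_Prop.classic (exists x y, [/\ x != v, y != v, x != y & c v x = c v y])).
      move=> [x [y [xv yv xy E]]]; rewrite eq_sym in xv; rewrite eq_sym in yv.
      have [a [b [d [U C Rd Sub]]]] := tri3 _ (card3 xv yv xy).
      have M : forall w, w \in [set v; x; y] -> w \in [:: a; b; d] by move=> w /Sub.
      have := tri U C Se Sc Rd (M v _) (M x _) (M y _) xv yv xy.
      by rewrite E eqxx !inE !eqxx ?orbT /= => /(_ isT isT isT) [].
    move=> NE.
    have Ui : uniq [seq c v x | x <- enum [set~ v]].
      rewrite map_inj_in_uniq ?enum_uniq // => x y.
      rewrite !mem_enum !inE => xv yv E; apply/eqP; apply/negPn/negP => xy.
      by apply: NE; exists x, y.
    have H : size [seq c v x | x <- enum [set~ v]] <= size (iota 0 3).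
      apply: uniq_leq_size => // z /mapP [x]; rewrite mem_enum !inE => xv ->.
      case: (Ec v x); first by rewrite eE eq_sym.
      by move=> _; case: (c v x) => [|[|[|]]].
    move: H; rewrite size_map -cardE cardsC1 size_iota.
    by move: N5; case: (#|T|) => [|[|[|[|[|n]]]]].
  have : (#|T| = 3) \/ (#|T| = 4).
    by move: N3 le4; case: (#|T|) => [|[|[|[|[|n]]]]] //; auto.
  by case=> H; [left|right]; apply: iso_K.
- move=> Hiso.
  have [n [n3 n4 Hn [g [gi eE]]]] : exists n, [/\ 2 < n, n <= 4, #|T| = n &
      exists g : T -> 'I_n, injective g /\ forall x y, e x y = (x != y)].
    by case: Hiso => /K_iso [H1 H2]; [exists 3 | exists 4].
  split.
    exists (fun x y => col (g x) (g y)); split.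
      by move=> x y _; rewrite col_sym col_lt3.
    move=> S HS.
    have : size (enum S) = 3 by rewrite -cardE.
    have US := enum_uniq (mem S).
    have MS := mem_enum (mem S).
    case: (enum S) US MS => [|a [|b [|d [|f s]]]] //= US MS _.
    exists [:: a; b; d]; split.
    - split => //=; move: US; rewrite /= !inE !negb_or andbT !eE; rewrite ?eE.
      by move=> /andP [/andP [ab ad] bd]; rewrite ab bd eq_sym ad.
    - by move=> x xS; rewrite MS.
    - rewrite /rainbow (map_next3 (fun x y => col (g x) (g y))) //; move: US; rewrite /= !inE !negb_or andbT.
      move=> /andP [/andP [ab ad] bd].
      have L : forall x : T, g x < 4 by move=> x; exact: leq_trans (ltn_ord _) n4.
      have D : forall x y, x != y -> nat_of_ord (g x) != g y.
        by move=> x y; rewrite (inj_eq val_inj) (inj_eq gi).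
      have := col_rainbow (L a) (L b) (L d) (D _ _ ab) (D _ _ ad) (D _ _ bd).
      by rewrite /= !inE !negb_or.
  move=> m m3 [c [Ec R]].
  have [S HS] := exists_set3 (leq_trans n3 (eq_leq (esym Hn))).
  have [s [G _ Rs]] := R S HS.
  have := size_rainbow Ec G Rs; case: G => _ S3 _.
  by move=> H; have := leq_trans S3 H; rewrite leqNgt m3.
Qed.
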